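(* Let $A_4$ be the alternating group of degree 4. The following d-identities form a basis of d-identities of $A_4$ (i.e. they all hold in $A_4$, and every group satisfying all of them is isomorphic to a section of $A_4$): (1) $\omega_{12}=\bigvee_{0\le i<j\le 12}(x_i=x_j)$; (2) $(x^2=1)\vee(x^3=1)$; (3) $(x_1^3=1)\vee(x_2^3=1)\vee((x_1x_2)^2=1)$; (4) $\bigvee_{(k_1,k_2,k_3)}\big(x_1^{3k_1}x_2^{3k_2}x_3^{3k_3}=1\big)$, the disjunction running over all nonzero vectors $(k_1,k_2,k_3)\in\{0,1\}^3$; (5) $(x_1^4=1)\vee(x_2^4=1)\vee((x_1x_2)^4=1)\vee((x_1x_2^2)^4=1)$.
   Context: A d-identity (disjunctive identity) is a universally quantified formula $\forall x_1\dots x_k\,[(f_1=1)\vee\dots\vee(f_n=1)]$ with the $f_i$ words in the free group on the variables; $u=v$ abbreviates $uv^{-1}=1$. A group satisfies it if it is true for all assignments. For a group $G$, $\mathrm{dvar}(G)$ is the class of groups satisfying every d-identity satisfied by $G$; for finite $G$ it is the class of groups isomorphic to sections (quotients of subgroups) of $G$. A set of d-identities is a basis of d-identities of $G$ if all its members hold in $G$ and every group satisfying them lies in $\mathrm{dvar}(G)$. *)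

(* Defs.v *)
From HB Require Import structures.
From mathcomp Require Import all_boot all_fingroup all_solvable.
From mathcomp Require Import alt.
Set Implicit Arguments. Unset Strict Implicit. Unset Printing Implicit Defensive.

Record grp := Grp {
  carrier :> Type;
  gmul : carrier -> carrier -> carrier;
  gone : carrier;
  ginv : carrier -> carrier;
  gmulA : forall x y z, gmul x (gmul y z) = gmul (gmul x y) z;
  gmul1 : forall x, gmul gone x = x;
  gmulV : forall x, gmul (ginv x) x = gone
}.

Fixpoint gexp (G : grp) (x : G) (n : nat) : G :=
  match n with 0 => gone G | S m => gmul x (gexp x m) end.

Definition d_id1 (G : grp) : Prop :=
  forall x : 'I_13 -> G, exists i j : 'I_13, (i < j)%N /\ x i = x j.
Definition d_id2 (G : grp) : Prop :=
  forall x : G, gexp x 2 = gone G \/ gexp x 3 = gone G.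
Definition d_id3 (G : grp) : Prop :=
  forall x1 x2 : G, gexp x1 3 = gone G \/ gexp x2 3 = gone G \/
                    gexp (gmul x1 x2) 2 = gone G.
Definition d_id4 (G : grp) : Prop :=
  forall x1 x2 x3 : G, exists k1 k2 k3 : bool, [|| k1, k2 | k3] /\
    gmul (gexp x1 (3 * k1)) (gmul (gexp x2 (3 * k2)) (gexp x3 (3 * k3))) = gone G.
Definition d_id5 (G : grp) : Prop :=
  forall x1 x2 : G, gexp x1 4 = gone G \/ gexp x2 4 = gone G \/
    gexp (gmul x1 x2) 4 = gone G \/ gexp (gmul x1 (gexp x2 2)) 4 = gone G.

Definition satisfies_basis (G : grp) : Prop :=
  [/\ d_id1 G, d_id2 G, d_id3 G, d_id4 G & d_id5 G].

Definition grp_of_fin (gT : finGroupType) : grp :=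
  @Grp gT (fun x y => (x * y)%g) 1%g (fun x => x^-1)%g
       (@mulgA gT) (@mul1g gT) (@mulVg gT).

Definition A4 : grp := grp_of_fin (subg_of (Alt_group 'I_4)).

Definition section_of_A4 (G : grp) : Prop :=
  exists (H K : {group {perm 'I_4}}),
    (H \subset Alt 'I_4)%g /\ (K <| H)%g /\
    exists f : G -> coset_of K,
      injective f /\
      (forall x y, f (gmul x y) = (f x * f y)%g) /\
      (forall x, f x \in (H / K)%g) /\
      (forall y, y \in (H / K)%g -> exists x, f x = y).

(* Main.v *)
Require Import Defs.
From mathcomp Require Import all_boot all_fingroup all_solvable.
From mathcomp Require Import alt.
From HB Require Import structures.
From mathcomp Require Import boolp.

Set Implicit Arguments. Unset Strict Implicit. Unset Printing Implicit Defensive.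

Definition T := (bool * bool * 'I_3)%type.
Definition k0 : 'I_3 := @Ordinal 3 0 isT.
Definition k1 : 'I_3 := @Ordinal 3 1 isT.
Definition k2 : 'I_3 := @Ordinal 3 2 isT.
Definition kadd (k k' : 'I_3) : 'I_3 := @Ordinal 3 ((k + k') %% 3) (ltn_pmod (k + k') (isT : 0 < 3)).
Definition rot (v : bool * bool) : bool * bool := (v.2, v.1 (+) v.2).
Definition tmul (s s' : T) : T :=
  let r := iter s.2 rot s'.1 in (s.1.1 (+) r.1, s.1.2 (+) r.2, kadd s.2 s'.2).
Definition tone : T := (false, false, k0).

Local Open Scope group_scope.
Section NF.
Variable G : groupType.
Implicit Types a b x : G.

Fact vv_key : unit. Proof. exact: tt. Qed.
Definition vv a b (p : bool * bool) : G := locked_with vv_key (a ^+ p.1 * b ^+ p.2).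
Lemma vvE a b p : vv a b p = a ^+ p.1 * b ^+ p.2. Proof. by rewrite /vv unlock. Qed.
Definition nf a b x (s : T) : G := vv a b s.1 * x ^+ s.2.

Lemma expg_modn x n m : x ^+ n = 1 -> x ^+ (m %% n) = x ^+ m.
Proof.
by move=> hx; rewrite {2}(divn_eq m n) expgnDr mulnC expgnA hx expg1n mul1g.
Qed.

Lemma vv_mul a b : a * a = 1 -> b * b = 1 -> commute a b ->
  forall p q, vv a b p * vv a b q = vv a b (p.1 (+) q.1, p.2 (+) q.2).
Proof.
move=> ha hb hab [i j] [i' j']; rewrite !vvE /=.
have cab : commute (b ^+ j) (a ^+ i') by apply: commuteX2; exact: esym hab.
rewrite -!mulgA (mulgA (b ^+ j)) cab -(mulgA (a ^+ i')) (mulgA (a ^+ i)) -!expgnDr.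
have h2 : forall y : G, y * y = 1 -> forall u v : bool, y ^+ (u + v) = y ^+ (u (+) v).
  move=> y hy u v; rewrite -(expg_modn (u + v) (hy : y ^+ 2 = 1)).
  by case: u; case: v.
by rewrite h2 // h2.
Qed.

Lemma conj1 a b x : b * b = 1 -> commute a b -> x * a = b * x -> x * b = a * b * x ->
  forall p, x * vv a b p = vv a b (rot p) * x.
Proof.
move=> hb hab h1 h2 [[] []]; rewrite !vvE /= ?expg1 ?expg0 ?mulg1 ?mul1g //.
by rewrite mulgA h1 -mulgA h2 !mulgA -hab -(mulgA a) hb mulg1.
Qed.

Lemma conjk a b x k : b * b = 1 -> commute a b ->
  (k = 0%N \/ (x * a = b * x /\ x * b = a * b * x)) ->
  forall p, x ^+ k * vv a b p = vv a b (iter k rot p) * x ^+ k.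
Proof.
move=> hb hab [-> p|[h1 h2]]; first by rewrite /= expg0 mulg1 mul1g.
elim: k => [|k IH] p; first by rewrite /= expg0 mulg1 mul1g.
by rewrite expgS -mulgA IH mulgA conj1 // -mulgA -expgS.
Qed.

Lemma nf_mul a b x s1 s2 : a * a = 1 -> b * b = 1 -> commute a b -> x ^+ 3 = 1 ->
  (s1.2 = k0 \/ (x * a = b * x /\ x * b = a * b * x)) ->
  nf a b x (tmul s1 s2) = nf a b x s1 * nf a b x s2.
Proof.
move=> ha hb hab hx hs; rewrite /nf /tmul /=.
have hs' : (s1.2 : nat) = 0%N \/ (x * a = b * x /\ x * b = a * b * x).
  by case: hs => [->|]; [left|right].

rewrite -[RHS]mulgA [in RHS](mulgA (x ^+ s1.2)) conjk //. rewrite -[in RHS]mulgA [in RHS](mulgA (vv a b s1.1)) -[in RHS]expgnDr vv_mul //.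
by rewrite expg_modn.
Qed.

End NF.
Definition o0 : 'I_4 := @Ordinal 4 0 isT.
Definition o1 : 'I_4 := @Ordinal 4 1 isT.
Definition o2 : 'I_4 := @Ordinal 4 2 isT.
Definition o3 : 'I_4 := @Ordinal 4 3 isT.
Definition pa : {perm 'I_4} := tperm o0 o1 * tperm o2 o3.
Definition pb : {perm 'I_4} := tperm o0 o3 * tperm o1 o2.
Definition pt : {perm 'I_4} := tperm o1 o2 * tperm o1 o3.
Definition fa (n : nat) : nat := match n with 0 => 1 | 1 => 0 | 2 => 3 | 3 => 2 | _ => n end.
Definition fb (n : nat) : nat := match n with 0 => 3 | 1 => 2 | 2 => 1 | 3 => 0 | _ => n end.
Definition ft (n : nat) : nat := match n with 1 => 2 | 2 => 3 | 3 => 1 | _ => n end.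

Lemma tpE (x y z : 'I_4) : tperm x y z = if z == x then y else if z == y then x else z.
Proof. rewrite permE /=. by case: (z =P y) => [->|]; case: (y =P x) => [->|]; case: (z =P x). Qed.

Lemma ptE (z : 'I_4) : nat_of_ord (pa z) = fa (nat_of_ord z) /\ nat_of_ord (pb z) = fb (nat_of_ord z) /\ nat_of_ord (pt z) = ft (nat_of_ord z).
Proof. by rewrite !permM !tpE; case: z => [[|[|[|[|m]]]] Hi]. Qed.
Fixpoint tpow (s : T) n := if n is m.+1 then tmul s (tpow s m) else tone.
Definition enumT : seq T :=
  [seq (ij, k) | ij <- [seq (i, j) | i <- [:: false; true], j <- [:: false; true]], k <- [:: k0; k1; k2]].
Lemma mem_enumT s : s \in enumT.
Proof.
case: s => [[i j] [[|[|[|m]]] Hm]] //; case: i; case: j; vm_compute; try reflexivity.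
Qed.

Definition nfp := nf pa pb pt.
Definition fnf (s : T) (n : nat) := iter s.2 ft (iter s.1.2 fb (iter s.1.1 fa n)).

Lemma iter_val (p : {perm 'I_4}) f n z : (forall z, nat_of_ord (p z) = f (nat_of_ord z)) ->
  nat_of_ord (iter n p z) = iter n f (nat_of_ord z).
Proof. by move=> h; elim: n => //= n IH; rewrite h IH. Qed.

Lemma nfp_val s z : nat_of_ord (nfp s z) = fnf s (nat_of_ord z).
Proof.
rewrite /nfp /nf vvE !permM !permX /fnf.
rewrite (@iter_val pt ft); last by move=> y; case: (ptE y) => _ [].
rewrite (@iter_val pb fb); last by move=> y; case: (ptE y) => _ [].
by rewrite (@iter_val pa fa); last by move=> y; case: (ptE y).
Qed.

Definition chk_inj := all (fun s1 => all (fun s2 =>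
  ((fnf s1 0, fnf s1 1) == (fnf s2 0, fnf s2 1)) ==> (s1 == s2)) enumT) enumT.
Lemma chk_inj_ok : chk_inj. Proof. by vm_compute. Qed.

Lemma nfp_inj : injective nfp.
Proof.
move=> s1 s2 E.
have := chk_inj_ok; rewrite /chk_inj => /allP /(_ s1 (mem_enumT s1)) /allP /(_ s2 (mem_enumT s2)).
by rewrite -!(nfp_val _ o0) -!(nfp_val _ o1) E eqxx => /eqP.
Qed.

Lemma perm_eq4 (p q : {perm 'I_4}) f g : (forall z, nat_of_ord (p z) = f (nat_of_ord z)) ->
  (forall z, nat_of_ord (q z) = g (nat_of_ord z)) -> all (fun n => f n == g n) (iota 0 4) -> p = q.
Proof.
move=> hp hq /allP h; apply/permP => z; apply: ord_inj; rewrite hp hq; apply/eqP; apply: h.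
by rewrite mem_iota /= ltn_ord.
Qed.

Lemma vpM (p q : {perm 'I_4}) f g : (forall z, nat_of_ord (p z) = f (nat_of_ord z)) ->
  (forall z, nat_of_ord (q z) = g (nat_of_ord z)) -> forall z, nat_of_ord ((p * q) z) = (g \o f) (nat_of_ord z).
Proof. by move=> hp hq z; rewrite permM hq hp. Qed.

Lemma hpa z : nat_of_ord (pa z) = fa (nat_of_ord z). Proof. by case: (ptE z). Qed.
Lemma hpb z : nat_of_ord (pb z) = fb (nat_of_ord z). Proof. by case: (ptE z) => _ []. Qed.
Lemma hpt z : nat_of_ord (pt z) = ft (nat_of_ord z). Proof. by case: (ptE z) => _ []. Qed.
Lemma hp1 z : nat_of_ord ((1 : {perm 'I_4}) z) = id (nat_of_ord z). Proof. by rewrite perm1. Qed.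

Lemma rel_aa : pa * pa = 1.
Proof. by apply: (perm_eq4 (vpM hpa hpa) hp1). Qed.
Lemma rel_bb : pb * pb = 1.
Proof. by apply: (perm_eq4 (vpM hpb hpb) hp1). Qed.
Lemma rel_ab : commute pa pb.
Proof. by apply: (perm_eq4 (vpM hpa hpb) (vpM hpb hpa)). Qed.
Lemma rel_t3 : pt ^+ 3 = 1.
Proof. by rewrite !expgS expg0 mulg1; apply: (perm_eq4 (vpM hpt (vpM hpt hpt)) hp1). Qed.
Lemma rel_ta : pt * pa = pb * pt.
Proof. by apply: (perm_eq4 (vpM hpt hpa) (vpM hpb hpt)). Qed.
Lemma rel_tb : pt * pb = pa * pb * pt.
Proof. by apply: (perm_eq4 (vpM hpt hpb) (vpM (vpM hpa hpb) hpt)). Qed.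

Lemma nfp_mul s1 s2 : nfp (tmul s1 s2) = nfp s1 * nfp s2.
Proof.
apply: nf_mul; [exact: rel_aa|exact: rel_bb|exact: rel_ab|exact: rel_t3|].
by right; split; [exact: rel_ta|exact: rel_tb].
Qed.

Lemma nfp_one : nfp tone = 1.
Proof. by rewrite /nfp /nf vvE /= !expg0 !mulg1. Qed.

Lemma nfp_Alt s : nfp s \in 'Alt_('I_4).
Proof.
have ha : pa \in 'Alt_('I_4) by rewrite Alt_even /pa odd_permM !odd_tperm.
have hb : pb \in 'Alt_('I_4) by rewrite Alt_even /pb odd_permM !odd_tperm.
have ht : pt \in 'Alt_('I_4) by rewrite Alt_even /pt odd_permM !odd_tperm.
by rewrite /nfp /nf vvE !groupM ?groupX.
Qed.

Lemma card_T : #|{: T}| = 12.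
Proof. by rewrite !card_prod !card_bool card_ord. Qed.

Lemma Alt_img : 'Alt_('I_4) = nfp @: setT.
Proof.
apply/esym/eqP; rewrite eqEcard; apply/andP; split.
  by apply/subsetP => p /imsetP [s _ ->]; exact: nfp_Alt.
rewrite card_imset; last exact: nfp_inj.
have h4 : 1 < #|'I_4| by rewrite card_ord.
have := card_Alt h4; rewrite card_ord cardsT card_T.
by move=> h; rewrite -(@leq_pmul2l 2) // h.
Qed.

Definition toT (y : subg_of (Alt_group 'I_4)) : T := odflt tone [pick s | nfp s == sgval y].

Lemma nfp_toT y : nfp (toT y) = sgval y.
Proof.
rewrite /toT; case: pickP => [s /eqP //| H].
have : sgval y \in 'Alt_('I_4) := subgP y.
by rewrite Alt_img => /imsetP [s _ E]; move: (H s); rewrite E eqxx.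
Qed.

Lemma toT_inj : injective toT.
Proof. by move=> y z E; apply: subg_inj; rewrite -!nfp_toT E. Qed.

Lemma toT_mul (y z : A4) : toT (gmul y z) = tmul (toT y) (toT z).
Proof. by apply: nfp_inj; rewrite nfp_mul !nfp_toT. Qed.

Lemma toT_one : toT (gone A4) = tone.
Proof. by apply: nfp_inj; rewrite nfp_one nfp_toT. Qed.

Lemma toT_exp (y : A4) n : toT (gexp y n) = tpow (toT y) n.
Proof. by elim: n => [|n IH] /=; [exact: toT_one | rewrite toT_mul IH]. Qed.

Lemma toT_eq1 (y : A4) : (y = gone A4) <-> toT y = tone.
Proof. by split=> [->|h]; [exact: toT_one | apply: toT_inj; rewrite h toT_one]. Qed.

Definition chk2 := all (fun s => (tpow s 2 == tone) || (tpow s 3 == tone)) enumT.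
Definition chk3 := all (fun s1 => all (fun s2 =>
  [|| tpow s1 3 == tone, tpow s2 3 == tone | tpow (tmul s1 s2) 2 == tone]) enumT) enumT.
Definition chk5 := all (fun s1 => all (fun s2 =>
  [|| tpow s1 4 == tone, tpow s2 4 == tone, tpow (tmul s1 s2) 4 == tone
    | tpow (tmul s1 (tpow s2 2)) 4 == tone]) enumT) enumT.
Definition klist : seq (bool * bool * bool) :=
  [seq (ij, k) | ij <- [seq (i, j) | i <- [:: false; true], j <- [:: false; true]], k <- [:: false; true]].
Definition chk4 :=
 all (fun s1 => all (fun s2 => all (fun s3 =>
   has (fun k : bool * bool * bool =>
     [|| k.1.1, k.1.2 | k.2] &&
     (tmul (tpow s1 (3 * k.1.1)) (tmul (tpow s2 (3 * k.1.2)) (tpow s3 (3 * k.2))) == tone))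
   klist) enumT) enumT) enumT.
Lemma chk2_ok : chk2. Proof. by vm_compute. Qed.
Lemma chk3_ok : chk3. Proof. by vm_compute. Qed.
Lemma chk4_ok : chk4. Proof. by vm_compute. Qed.
Lemma chk5_ok : chk5. Proof. by vm_compute. Qed.

Lemma A4_basis : satisfies_basis A4.
Proof.
split.
- move=> x; case: (pselect (exists i j : 'I_13, (i < j)%N /\ x i = x j)) => // hn.
  exfalso.
  have inj : injective (toT \o x).
    move=> i j /= /toT_inj e; apply: ord_inj.
    case: (ltngtP i j) => // lt; exfalso; apply: hn; [exists i, j | exists j, i] => //.
  by have := leq_card (toT \o x) inj; rewrite card_ord card_T.
- move=> y; rewrite !toT_eq1 !toT_exp.
  by have := allP chk2_ok (toT y) (mem_enumT _); case/orP => /eqP; [left|right].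
- move=> y z; rewrite !toT_eq1 !toT_exp toT_mul.
  have := allP (allP chk3_ok (toT y) (mem_enumT _)) (toT z) (mem_enumT _).
  by case/or3P => /eqP; [left|right; left|right; right].
- move=> y1 y2 y3.
  have := allP (allP (allP chk4_ok (toT y1) (mem_enumT _)) (toT y2) (mem_enumT _)) (toT y3) (mem_enumT _).
  case/hasP => [[[k1 k2] k3]] _ /andP [hk /eqP /= e]; exists k1, k2, k3; split => //.
  by rewrite toT_eq1 !toT_mul !toT_exp.
- move=> y z; rewrite !toT_eq1 !toT_exp !toT_mul ?toT_exp ?toT_one.
  have := allP (allP chk5_ok (toT y) (mem_enumT _)) (toT z) (mem_enumT _).
  by case/or4P => /eqP; [left|right; left|right; right; left|right; right; right].
Qed.

Section Gen.
Variable Gt : groupType.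
Variables (a b x : Gt) (full : bool).
Hypotheses (ha : a * a = 1) (hb : b * b = 1) (hab : commute a b) (hx : x ^+ 3 = 1)
  (hrel : full -> x * a = b * x /\ x * b = a * b * x).
Definition Sok (s : T) := full || (s.2 == k0).
Hypothesis hsurj : forall g : Gt, exists s, Sok s /\ nf a b x s = g.

Lemma nfG_mul s1 s2 : Sok s1 -> nf a b x (tmul s1 s2) = nf a b x s1 * nf a b x s2.
Proof.
move=> h; apply: nf_mul => //; case/orP: h => [/hrel|/eqP]; [right|left] => //.
Qed.

Lemma Sok_mul s1 s2 : Sok s1 -> Sok s2 -> Sok (tmul s1 s2).
Proof.
rewrite /Sok; case: full => //=.
by case: s1 => [p1 q1]; case: s2 => [p2 q2] /= /eqP -> /eqP ->.
Qed.

Definition Hs : {set {perm 'I_4}} := nfp @: [set s | Sok s].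

Lemma Sok1 : Sok tone. Proof. by rewrite /Sok orbT. Qed.

Lemma HsP : group_set Hs.
Proof.
apply/group_setP; split.
  by apply/imsetP; exists tone; [rewrite inE; exact: Sok1 | rewrite nfp_one].
move=> h1 h2 /imsetP [s1 hs1 ->] /imsetP [s2 hs2 ->]; apply/imsetP.
exists (tmul s1 s2); last by rewrite nfp_mul.
rewrite !inE in hs1 hs2 *; exact: Sok_mul.
Qed.

Definition Hg := Group HsP.

Definition phi (h : {perm 'I_4}) : Gt :=
  if [pick s | Sok s && (nfp s == h)] is Some s then nf a b x s else 1.

Lemma phi_nfp s : Sok s -> phi (nfp s) = nf a b x s.
Proof.
move=> hs; rewrite /phi; case: pickP => [s' /andP [_ /eqP /nfp_inj -> //] | H0].
by move: (H0 s); rewrite hs eqxx.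
Qed.

Lemma phiM h1 h2 : h1 \in Hg -> h2 \in Hg -> phi (h1 * h2) = phi h1 * phi h2.
Proof.
move=> /imsetP [s1 hs1 ->] /imsetP [s2 hs2 ->]; move: hs1 hs2; rewrite !inE => hs1 hs2.
have hm := Sok_mul hs1 hs2.
by rewrite -nfp_mul !phi_nfp // nfG_mul.
Qed.

Lemma phi1 : phi 1 = 1.
Proof. by rewrite -nfp_one phi_nfp ?Sok1 // /nf vvE /= !expg0 !mulg1. Qed.

Lemma phiV h : h \in Hg -> phi h^-1 = (phi h)^-1.
Proof.
move=> hH; apply/esym/mulg1_eq; by rewrite -phiM ?groupV // mulgV phi1.
Qed.

Definition Ks : {set {perm 'I_4}} := [set h in Hg | `[< phi h = 1 >] ].

Lemma KsP : group_set Ks.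
Proof.
apply/group_setP; split; first by rewrite inE group1; apply/asboolP; exact: phi1.
move=> h1 h2; rewrite !inE => /andP [H1 /asboolP P1] /andP [H2 /asboolP P2].
by rewrite groupM //=; apply/asboolP; rewrite phiM // P1 P2 mulg1.
Qed.

Definition Kg := Group KsP.

Lemma KH : Kg \subset Hg.
Proof. by apply/subsetP => h; rewrite inE => /andP []. Qed.

Lemma HnK : Hg \subset 'N(Kg).
Proof.
apply/subsetP => h hH; rewrite inE; apply/subsetP => y.
rewrite mem_conjg !inE => /andP [hk /asboolP pk].
rewrite -(conjgKV h y) conjgE; move: (y ^ h^-1) hk pk => k hk pk.
rewrite !groupM ?groupV //=; apply/asboolP.
by rewrite !phiM ?groupM ?groupV // pk mul1g -phiM ?groupV // mulVg phi1.
Qed.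

Lemma nKH : Kg <| Hg.
Proof. by rewrite /normal KH HnK. Qed.

Lemma cosE h1 h2 : h1 \in Hg -> h2 \in Hg -> (coset Kg h1 = coset Kg h2 <-> phi h1 = phi h2).
Proof.
move=> H1 H2.
have N1 : h1 \in 'N(Kg) := subsetP HnK _ H1.
have N2 : h2 \in 'N(Kg) := subsetP HnK _ H2.
split.
  move/(rcoset_kercosetP N1 N2); rewrite mem_rcoset !inE => /andP [_ /asboolP].
  by rewrite phiM ?groupV // phiV // => /divg1_eq.
move=> e; apply/(rcoset_kercosetP N1 N2); rewrite mem_rcoset !inE groupM ?groupV //=.
by apply/asboolP; rewrite phiM ?groupV // phiV // e mulgV.
Qed.

Lemma hsurjb g : exists s, Sok s && (nf a b x s == g).
Proof. by case: (hsurj g) => s [h1 h2]; exists s; rewrite h1 h2 eqxx. Qed.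

Definition sel g : T := xchoose (hsurjb g).
Lemma selP g : Sok (sel g) /\ nf a b x (sel g) = g.
Proof. by have /andP [h1 /eqP h2] := xchooseP (hsurjb g). Qed.

Definition hsel g := nfp (sel g).
Lemma hselH g : hsel g \in Hg.
Proof. by apply/imsetP; exists (sel g) => //; rewrite inE; case: (selP g). Qed.
Lemma phi_hsel g : phi (hsel g) = g.
Proof. by case: (selP g) => h1 h2; rewrite /hsel phi_nfp. Qed.

Lemma GEN : exists (H K : {group {perm 'I_4}}),
  H \subset Alt 'I_4 /\ K <| H /\
  exists f : Gt -> coset_of K,
    injective f /\ (forall y z, f (y * z) = f y * f z) /\
    (forall y, f y \in (H / K)) /\ (forall c, c \in (H / K) -> exists y, f y = c).
Proof.
exists Hg, Kg; split.
  by apply/subsetP => h /imsetP [s _ ->]; exact: nfp_Alt.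
split; first exact: nKH.
exists (fun g => coset Kg (hsel g)); split.
  by move=> g1 g2 /(cosE (hselH _) (hselH _)); rewrite !phi_hsel.
split.
  move=> y z; rewrite -coset_morphM ?(subsetP HnK) ?hselH //.
  apply/cosE; [exact: hselH | by apply: groupM; exact: hselH | ].
  by rewrite (phiM (hselH y) (hselH z)) !phi_hsel.
split; first by move=> y; rewrite mem_quotient ?hselH.
move=> c /morphimP [h Nh Hh ->]; exists (phi h).
by apply/cosE; rewrite ?hselH // phi_hsel.
Qed.
End Gen.
Lemma gmulrV (G : grp) (x : G) : gmul x (ginv x) = gone G.
Proof.
have e : gmul x (ginv x) = gmul (gmul (ginv (ginv x)) (ginv x)) (gmul x (ginv x)).
  by rewrite gmulV gmul1.
by rewrite e -gmulA (gmulA (ginv x) x (ginv x)) gmulV gmul1 gmulV.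
Qed.
Lemma gmul1r (G : grp) (x : G) : gmul x (gone G) = x.
Proof. by rewrite -(gmulV x) gmulA gmulrV gmul1. Qed.

Definition GT (G : grp) : Type := carrier G.
HB.instance Definition _ (G : grp) := gen_eqMixin (GT G).
HB.instance Definition _ (G : grp) := gen_choiceMixin (GT G).
HB.instance Definition _ (G : grp) :=
  isGroup.Build (GT G) (@gmulA G) (@gmul1 G) (@gmul1r G) (@gmulV G) (@gmulrV G).

Lemma gexpE (G : grp) (x : GT G) n : gexp x n = x ^+ n.
Proof. by elim: n => // n IH; rewrite expgS -IH. Qed.
Section Class.
Variable Gt : groupType.
Hypothesis D2 : forall y : Gt, y ^+ 2 = 1 \/ y ^+ 3 = 1.
Hypothesis D3 : forall y z : Gt, y ^+ 3 = 1 \/ z ^+ 3 = 1 \/ (y * z) ^+ 2 = 1.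
Hypothesis D4 : forall y1 y2 y3 : Gt, exists k1 k2 k3 : bool, [|| k1, k2 | k3] /\
  y1 ^+ (3 * k1) * (y2 ^+ (3 * k2) * y3 ^+ (3 * k3)) = 1.
Hypothesis D5 : forall y z : Gt, y ^+ 4 = 1 \/ z ^+ 4 = 1 \/ (y * z) ^+ 4 = 1 \/
  (y * z ^+ 2) ^+ 4 = 1.

Lemma inv2 (v : Gt) : v ^+ 2 = 1 -> v^-1 = v.
Proof. by move=> h; apply: mulg1_eq. Qed.
Lemma e3 (v : Gt) : v ^+ 2 = 1 -> v ^+ 3 = v.
Proof. by move=> h; rewrite expgS h mulg1. Qed.

Lemma D4c (y1 y2 y3 : Gt) : y1 ^+ 2 = 1 -> y2 ^+ 2 = 1 -> y3 ^+ 2 = 1 ->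
  y1 = 1 \/ y2 = 1 \/ y3 = 1 \/ y1 * y2 = 1 \/ y1 * y3 = 1 \/ y2 * y3 = 1 \/ y1 * (y2 * y3) = 1.
Proof.
move=> h1 h2 h3; have [k1 [k2 [k3 [hk e]]]] := D4 y1 y2 y3.
move: hk e; case: k1; case: k2; case: k3 => //= _;
  rewrite ?muln0 ?muln1 ?expg0 ?e3 ?mul1g ?mulg1 // => e; tauto.
Qed.

Lemma sq4 (v : Gt) : v ^+ 4 = 1 -> v ^+ 2 = 1.
Proof.
case: (D2 v) => // h3 h4.
by move: h4; rewrite expgSr h3 mul1g => ->; rewrite expg1n.
Qed.

Lemma x3 (x : Gt) : x ^+ 2 != 1 -> x ^+ 3 = 1.
Proof. by case: (D2 x) => // ->; rewrite eqxx. Qed.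

Lemma fixcomm (y z : Gt) : y ^ z = y -> commute y z.
Proof. by move=> h; rewrite /commute conjgC h. Qed.

Lemma conjV_comm (y z : Gt) : y ^ z^-1 = y -> commute z y.
Proof. by move=> h; have := commuteV (fixcomm h); rewrite invgK => c; exact: esym c. Qed.

Lemma NC (x v : Gt) : x ^+ 2 != 1 -> v ^+ 2 = 1 -> v != 1 -> ~ commute x v.
Proof.
move=> hx hv hv1 hc; have hx3 := x3 hx.
case: (D2 (x * v)); rewrite expgMn //.
  by rewrite hv mulg1 => h; rewrite h eqxx in hx.
by rewrite hx3 e3 // mul1g => h; rewrite h eqxx in hv1.
Qed.

Lemma xinv2 (x : Gt) : x ^+ 3 = 1 -> x^-1 * x^-1 = x.
Proof.
move=> h; have -> : x^-1 = x ^+ 2 by apply: mulg1_eq; rewrite -expgS.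
by rewrite -expgnDr (expgSr x 3) h mul1g.
Qed.

Lemma Vmem (a b : Gt) : a ^+ 2 = 1 -> b ^+ 2 = 1 -> a != 1 -> b != 1 -> a != b ->
  commute a b -> forall v, v ^+ 2 = 1 -> exists i j : bool, v = a ^+ i * b ^+ j.
Proof.
move=> ha hb ha1 hb1 hab hc v hv.
case: (D4c ha hb hv) => [e|[e|[e|[e|[e|[e|e]]]]]].
- by rewrite e eqxx in ha1.
- by rewrite e eqxx in hb1.
- by exists false, false; rewrite e /= expg0 mulg1.
- by move: hab; rewrite -(inv2 ha) (mulg1_eq e) eqxx.
- by exists true, false; rewrite /= expg0 mulg1 -(mulg1_eq e) inv2.
- by exists false, true; rewrite /= expg0 mul1g -(mulg1_eq e) inv2.
- exists true, true; move: e; rewrite mulgA => /mulg1_eq <-.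
  by rewrite invMg !inv2.
Qed.

Lemma surjB (a b x : Gt) : x ^+ 2 != 1 ->
  (forall v, v ^+ 2 = 1 -> exists i j : bool, v = a ^+ i * b ^+ j) ->
  forall g, exists s, Sok true s /\ nf a b x s = g.
Proof.
move=> hx Vm g; have hx3 := x3 hx.
case: (eqVneq (g ^+ 2) 1) => hg.
  have [i [j ->]] := Vm g hg; exists ((i, j), k0); split => //.
  by rewrite /nf vvE /= expg0 mulg1.
have hg3 := x3 hg.
case: (D5 g x) => [h|[h|[h|h]]].
- by move: hg; rewrite (sq4 h) eqxx.
- by move: hx; rewrite (sq4 h) eqxx.
- have [i [j e]] := Vm _ (sq4 h); exists ((i, j), k2); split => //.
  by rewrite /nf vvE /= -e -mulgA -expgS hx3 mulg1.
- have [i [j e]] := Vm _ (sq4 h); exists ((i, j), k1); split => //.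
  by rewrite /nf vvE /= -e expg1 -mulgA -expgSr hx3 mulg1.
Qed.

Lemma surjA (a b : Gt) :
  (forall v : Gt, exists i j : bool, v = a ^+ i * b ^+ j) ->
  forall g, exists s, Sok false s /\ nf a b 1 s = g.
Proof.
move=> Vm g; have [i [j ->]] := Vm g; exists ((i, j), k0); split => //.
by rewrite /nf vvE /= expg0 mulg1.
Qed.

Lemma classify : exists (a b x : Gt) (full : bool),
  [/\ a * a = 1 /\ b * b = 1, commute a b, x ^+ 3 = 1,
      (full -> x * a = b * x /\ x * b = a * b * x) &
      (forall g, exists s, Sok full s /\ nf a b x s = g)].
Proof.
case: (pselect (exists x : Gt, x ^+ 2 != 1)) => [[x hx]|hn].
  have hx3 := x3 hx.
  case: (pselect (exists a : Gt, a ^+ 2 = 1 /\ a != 1)) => [[a [ha2 ha1]]|hn].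
    pose b := a ^ x^-1; pose c := b ^ x^-1.
    have hb2 : b ^+ 2 = 1 by rewrite /b -conjXg ha2 conj1g.
    have hb1 : b != 1 by rewrite /b conjg_eq1.
    have hc2 : c ^+ 2 = 1 by rewrite /c -conjXg hb2 conj1g.
    have hc1 : c != 1 by rewrite /c conjg_eq1.
    have hab : a != b.
      by apply/eqP => e; apply: (NC hx ha2 ha1); apply: conjV_comm; rewrite -/b -e.
    have hbc : b != c.
      by apply/eqP => e; apply: (NC hx hb2 hb1); apply: conjV_comm; rewrite -/c -e.
    have hac : a != c.
      apply/eqP => e; apply: (NC hx ha2 ha1); apply: esym; apply: fixcomm.
      by rewrite {2}e /c /b -conjgM xinv2.
    have hcab : commute a b.
      case: (D3 a b) => [h|[h|h]].
      - by move: ha1; rewrite -(e3 ha2) h eqxx.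
      - by move: hb1; rewrite -(e3 hb2) h eqxx.
      - by move: (inv2 h); rewrite invMg !inv2.
    have hcab' : c = a * b.
      case: (D4c ha2 hb2 hc2) => [e|[e|[e|[e|[e|[e|e]]]]]].
      - by rewrite e eqxx in ha1.
      - by rewrite e eqxx in hb1.
      - by rewrite e eqxx in hc1.
      - by move: hab; rewrite -(inv2 ha2) (mulg1_eq e) eqxx.
      - by move: hac; rewrite -(inv2 ha2) (mulg1_eq e) eqxx.
      - by move: hbc; rewrite -(inv2 hb2) (mulg1_eq e) eqxx.
      - move: e; rewrite mulgA => /mulg1_eq <-.
        by rewrite invMg !inv2.
    exists a, b, x, true; split => //.
      move=> _; split; first by rewrite /b conjgE invgK -!mulgA mulVg mulg1.
      by rewrite -hcab' /c conjgE invgK -!mulgA mulVg mulg1.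
    exact: surjB hx (Vmem ha2 hb2 ha1 hb1 hab hcab).
  exists 1, 1, x, true; split;
    [by split; rewrite mulg1 | by rewrite /commute | exact: hx3
    | by move=> _; rewrite !mulg1 mul1g | ].
  apply: surjB hx _ => v hv; exists false, false; rewrite expg0 mulg1.
  by case: (eqVneq v 1) => // hv1; case: hn; exists v.
have hall (y : Gt) : y ^+ 2 = 1 by case: (eqVneq (y ^+ 2) 1) => // h; case: hn; exists y.
have hcomm (y z : Gt) : commute y z.
  by move: (inv2 (hall (y * z))); rewrite invMg !inv2.
case: (pselect (exists a : Gt, a != 1)) => [[a ha1]|hna].
  case: (pselect (exists b : Gt, b != 1 /\ b != a)) => [[b [hb1 hba]]|hnb].
    exists a, b, 1, false; split;
      [by split; apply: hall | exact: hcomm | by rewrite expg1n | by [] | ].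
    apply: surjA => v; apply: (Vmem (hall a) (hall b)) => //; by rewrite eq_sym.
  exists a, 1, 1, false; split;
    [by split; [apply: hall | rewrite mulg1] | exact: hcomm | by rewrite expg1n | by [] | ].
  apply: surjA => v; case: (eqVneq v 1) => [->|hv1].
    by exists false, false; rewrite expg0 mulg1.
  case: (eqVneq v a) => [->|hva]; first by exists true, false; rewrite expg1 expg0 mulg1.
  by case: hnb; exists v.
exists 1, 1, 1, false; split;
  [by split; rewrite mulg1 | exact: hcomm | by rewrite expg1n | by [] | ].
apply: surjA => v; exists false, false; rewrite expg0 mulg1.
by case: (eqVneq v 1) => // hv1; case: hna; exists v.
Qed.
End Class.

Theorem proposition3 :
  satisfies_basis A4 /\
  (forall G : grp, satisfies_basis G -> section_of_A4 G).
Proof.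
split; first exact: A4_basis.
move=> G [_ d2 d3 d4 d5].
have D2' : forall y : GT G, y ^+ 2 = 1 \/ y ^+ 3 = 1.
  by move=> y; rewrite -!gexpE; exact: d2 y.
have D3' : forall y z : GT G, y ^+ 3 = 1 \/ z ^+ 3 = 1 \/ (y * z) ^+ 2 = 1.
  by move=> y z; rewrite -!gexpE; exact: d3 y z.
have D4' : forall y1 y2 y3 : GT G, exists k1 k2 k3 : bool, [|| k1, k2 | k3] /\
    y1 ^+ (3 * k1) * (y2 ^+ (3 * k2) * y3 ^+ (3 * k3)) = 1.
  move=> y1 y2 y3; case: (d4 y1 y2 y3) => k1 [k2 [k3 [hk e]]].
  by exists k1, k2, k3; split => //; rewrite -!gexpE.
have D5' : forall y z : GT G, y ^+ 4 = 1 \/ z ^+ 4 = 1 \/ (y * z) ^+ 4 = 1 \/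
    (y * z ^+ 2) ^+ 4 = 1.
  by move=> y z; rewrite -!gexpE; exact: d5 y z.
have [a [b [x [full [[ha hb] hab hx hrel hs]]]]] := classify D2' D3' D4' D5'.
have [H [K [hH [hK [f [fi [fm [fin fon]]]]]]]] := GEN ha hb hab hx hrel hs.
by exists H, K; split => //; split => //; exists f.
Qed.
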